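(* Let $\mathcal{H}$ be a complex linear space equipped with an indefinite inner product $[\cdot,\cdot]$, and let $\mathcal{F}_{++}=\{f\in\mathcal{H} : [f,f]>0\}$. Then every $f\in\mathcal{H}$ can be written as $f=g_1+g_2$ with $g_1,g_2\in\mathcal{F}_{++}$, i.e. $\mathcal{H}=\mathcal{F}_{++}+\mathcal{F}_{++}$. Moreover, every linear operator $W$ defined on $\mathcal{F}_{++}$ can be uniquely extended to a linear operator acting on the whole space $\mathcal{H}$.
   Context: An indefinite inner product on a complex linear space $\mathcal{H}$ is a Hermitian sesquilinear form $[\cdot,\cdot]:\mathcal{H}\times\mathcal{H}\to\mathbb{C}$ (linear in the second argument, $[f,g]=\overline{[g,f]}$) such that there exist $f$ with $[f,f]>0$ and $g$ with $[g,g]<0$. Throughout, $\mathcal{H}$ is assumed non-degenerate: $[f,g]=0$ for all $g\in\mathcal{H}$ implies $f=0$. An operator $W:\mathcal{F}_{++}\to\mathcal{H}$ is called linear (on $\mathcal{F}_{++}$) if $W(cf)=cWf$ for all $f\in\mathcal{F}_{++}$ and nonzero $c\in\mathbb{C}$, and $W(f+g)=Wf+Wg$ whenever $f,g\in\mathcal{F}_{++}$ and $f+g\in\mathcal{F}_{++}$. *)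

(* Defs.v *)
From HB Require Import structures.
From mathcomp Require Import all_boot all_order all_algebra.
From mathcomp Require Import complex.
From mathcomp Require Import reals.
Set Implicit Arguments. Unset Strict Implicit. Unset Printing Implicit Defensive.
Import Order.TTheory GRing.Theory Num.Theory.
Local Open Scope ring_scope.

Definition hermitian_sesquilinear (C : numClosedFieldType) (V : lmodType C)
  (form : V -> V -> C) : Prop :=
  (forall (a : C) (f g h : V), form f (a *: g + h) = a * form f g + form f h) /\
  (forall f g : V, form f g = (form g f)^*).

Definition indefinite_inner_product (C : numClosedFieldType) (V : lmodType C)
  (form : V -> V -> C) : Prop :=
  hermitian_sesquilinear form /\
  (exists f : V, 0 < form f f) /\ (exists g : V, form g g < 0).

Definition ip_nondegenerate (C : numClosedFieldType) (V : lmodType C)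
  (form : V -> V -> C) : Prop :=
  forall f : V, (forall g : V, form f g = 0) -> f = 0.

Definition Fpp (C : numClosedFieldType) (V : lmodType C)
  (form : V -> V -> C) (f : V) : Prop := 0 < form f f.

(* W is linear on F_{++} (only values of W on F_{++} matter). *)
Definition linear_on_Fpp (C : numClosedFieldType) (V : lmodType C)
  (form : V -> V -> C) (W : V -> V) : Prop :=
  (forall (c : C) (f : V), Fpp form f -> c != 0 -> W (c *: f) = c *: W f) /\
  (forall f g : V, Fpp form f -> Fpp form g -> Fpp form (f + g) ->
     W (f + g) = W f + W g).

Definition linear_op (C : numClosedFieldType) (V : lmodType C) (W : V -> V) : Prop :=
  forall (a : C) (f g : V), W (a *: f + g) = a *: W f + W g.

(* Main.v *)
Require Import Defs.
From HB Require Import structures.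
From mathcomp Require Import all_boot all_order all_algebra.
From mathcomp Require Import complex.
From mathcomp Require Import reals.
From mathcomp Require Import ring.
Import Order.TTheory GRing.Theory Num.Theory.
Local Open Scope ring_scope.

Set Implicit Arguments. Unset Strict Implicit.
Section Gen.
Variables (C : numClosedFieldType) (V : lmodType C) (form : V -> V -> C).
Hypothesis Hlin : forall (a : C) (f g h : V), form f (a *: g + h) = a * form f g + form f h.
Hypothesis Hherm : forall f g : V, form f g = (form g f)^*.

Lemma form0r f : form f 0 = 0.
Proof.
have h := Hlin 1 f 0 0; rewrite scaler0 add0r mul1r in h.
by apply: (addIr (form f 0)); rewrite add0r -h.
Qed.
Lemma formDr f g h : form f (g + h) = form f g + form f h.
Proof. by rewrite -[g]scale1r Hlin mul1r scale1r. Qed.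
Lemma formZr f a g : form f (a *: g) = a * form f g.
Proof. by rewrite -[a *: g]addr0 Hlin form0r addr0. Qed.
Lemma formDl f g h : form (g + h) f = form g f + form h f.
Proof. by rewrite Hherm formDr rmorphD; congr (_ + _); rewrite [RHS]Hherm. Qed.
Lemma formZl f a g : form (a *: g) f = a^* * form g f.
Proof. by rewrite Hherm formZr rmorphM; congr (_ * _); rewrite [RHS]Hherm. Qed.

Lemma form_real f : form f f \is Num.real.
Proof. by apply/CrealP; rewrite -Hherm. Qed.

Lemma real_normD (x : C) : x \is Num.real -> 0 <= `|x| + x.
Proof.
move=> xr; case/orP: (xr) => hx.
  by rewrite addr_ge0.
by rewrite ler0_norm // addNr.
Qed.

Definition pos f := 0 < form f f.

Lemma posZ a f : pos f -> a != 0 -> pos (a *: f).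
Proof.
rewrite /pos formZl formZr mulrA => hf ha.
by rewrite [a^* * a]mulrC -normCK pmulr_rgt0 // exprn_gt0 // normr_gt0.
Qed.

Variable p : V.
Hypothesis Hp : pos p.

Definition T f := (`|form f f| + 2 * `|form f p|) / form p p + 1.

Lemma T_ge1 f : 1 <= T f.
Proof. by rewrite /T lerDr divr_ge0 ?addr_ge0 ?mulr_ge0 // ltW. Qed.
Lemma T_ge0 f : 0 <= T f.
Proof. exact: le_trans ler01 (T_ge1 f). Qed.

Lemma pos_big f c : T f <= `|c| -> pos (f + c *: p).
Proof.
move=> hc; rewrite /pos.
set A := form f f; set B := form f p; set P := form p p; set n := `|c|.
have hP : 0 < P by [].
have hn1 : 1 <= n by apply: le_trans (T_ge1 f) hc.
have hn0 : 0 <= n by rewrite normr_ge0.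
have eQ : form (f + c *: p) (f + c *: p) =
   A + (c * B + (c * B)^*) + (n * n) * P.
  rewrite formDl !formDr !formZl !formZr /A /B /P.
  rewrite [form p f]Hherm -rmorphM.
  have -> : c^* * (c * form p p) = (n * n) * form p p.
    by rewrite mulrA [c^* * c]mulrC -normCK expr2.
  by rewrite -!addrA; congr (_ + _); rewrite addrC -!addrA; congr (_ + _); rewrite addrC.
rewrite eQ.
have h1 : 0 <= `|A| + A by apply: real_normD; apply: form_real.
have hx : `|c * B + (c * B)^*| <= 2 * (n * `|B|).
  apply: le_trans (ler_normD _ _) _.
  by rewrite norm_conjC normrM mulr2n mulrDl mul1r.
have h2 : 0 <= 2 * (n * `|B|) + (c * B + (c * B)^*).
  have hxr : c * B + (c * B)^* \is Num.real.
    by apply/CrealP; rewrite rmorphD /= conjCK addrC.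
  apply: le_trans (real_normD hxr) _.
  by rewrite lerD2r.
have hT : `|A| + 2 * `|B| <= (n - 1) * P.
  by rewrite -ler_pdivrMr // lerBrDr.
have h3 : `|A| + 2 * (n * `|B|) + P <= (n * n) * P.
  apply: (@le_trans _ _ (n * (`|A| + 2 * `|B| + P))).
    rewrite !mulrDr; apply: lerD; first apply: lerD.
    - by apply: ler_peMl.
    - by rewrite mulrCA.
    - by apply: ler_peMl => //; apply: ltW.
  rewrite -mulrA ler_wpM2l //.
  by move: hT; rewrite mulrBl mul1r lerBrDr.
have -> : A + (c * B + (c * B)^*) + n * n * P =
   P + ((`|A| + A) + (2 * (n * `|B|) + (c * B + (c * B)^*)) +
        (n * n * P - (`|A| + 2 * (n * `|B|) + P))).
  ring.
apply: (lt_le_trans hP); rewrite lerDl; apply: addr_ge0; [exact: addr_ge0 | by rewrite subr_ge0].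
Qed.

Lemma T_norm f : `|T f| = T f.
Proof. exact: ger0_norm (T_ge0 f). Qed.
Lemma T_neq0 f : T f != 0.
Proof. by rewrite gt_eqF // (lt_le_trans ltr01 (T_ge1 f)). Qed.

Lemma zmod_aux (M : zmodType) (X Y a b s : M) : X + s = Y + (a - b + s) -> X - a = Y - b.
Proof.
move=> h; rewrite -[X](addrK s) h addrA addrK addrA [Y + a - b]addrAC addrK //.
Qed.

Variable W : V -> V.
Hypothesis HWs : forall (c : C) (f : V), pos f -> c != 0 -> W (c *: f) = c *: W f.
Hypothesis HWa : forall f g : V, pos f -> pos g -> pos (f + g) -> W (f + g) = W f + W g.

Lemma keyK f c d : T f <= `|c| -> T f <= `|d| ->
  W (f + c *: p) - c *: W p = W (f + d *: p) - d *: W p.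
Proof.
move=> hc hd.
set s := T f + `|c| + `|d| + 1.
have s_pos : 0 < s.
  have h0 : 0 <= T f + `|c| + `|d| :=
    addr_ge0 (addr_ge0 (T_ge0 f) (normr_ge0 c)) (normr_ge0 d).
  by apply: (lt_le_trans ltr01); rewrite /s lerDr.
have hs : `|s| = s by apply: gtr0_norm.
have hcs : T f <= `|c + s|.
  rewrite addrC; apply: le_trans (lerB_normD s c).
  rewrite hs lerBrDr /s -[_ + 1]addrA lerDl.
  exact: addr_ge0 (normr_ge0 d) ler01.
have hne : c - d + s != 0.
  rewrite -normr_gt0 addrC; apply: (lt_le_trans _ (lerB_normD s (c - d))).
  rewrite subr_gt0 hs.
  apply: le_lt_trans (ler_normB c d) _.
  rewrite (_ : s = (`|c| + `|d|) + (T f + 1)); last by rewrite /s; ring.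
  by rewrite ltrDl (lt_le_trans ltr01) // lerDr T_ge0.
have E : f + (c + s) *: p = (f + c *: p) + s *: p by rewrite scalerDl addrA.
have E' : f + (c + s) *: p = (f + d *: p) + (c - d + s) *: p.
  by rewrite -addrA -scalerDl; congr (_ + _ *: _); ring.
have s0 : s != 0 by rewrite gt_eqF.
have W1 := HWa (pos_big hc) (posZ Hp s0) (eq_ind _ pos (pos_big hcs) _ E).
have W2 := HWa (pos_big hd) (posZ Hp hne) (eq_ind _ pos (pos_big hcs) _ E').
rewrite -E E' W2 !HWs // in W1.
rewrite !scalerDl scaleNr in W1; exact: zmod_aux (esym W1).
Qed.

Definition Wext f := W (f + T f *: p) - T f *: W p.

Lemma Wext_eq f c : T f <= `|c| -> Wext f = W (f + c *: p) - c *: W p.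
Proof. by move=> hc; rewrite /Wext (keyK hc (_ : T f <= `|T f|)) // T_norm. Qed.

Lemma Wext_pos f : pos f -> Wext f = W f.
Proof.
move=> hf; rewrite /Wext HWa // ?(posZ Hp (T_neq0 f)) ?pos_big ?T_norm //.
by rewrite HWs ?T_neq0 // addrK.
Qed.

Lemma WextD f g : Wext (f + g) = Wext f + Wext g.
Proof.
set c := T f + T g + T (f + g).
have c0 : 0 <= c := addr_ge0 (addr_ge0 (T_ge0 f) (T_ge0 g)) (T_ge0 _).
have hc : `|c| = c by apply: ger0_norm.
have hcf : T f <= `|c|.
  rewrite hc /c -addrA lerDl; exact: addr_ge0 (T_ge0 _) (T_ge0 _).
have hcg : T g <= `|c|.
  rewrite hc /c addrAC lerDr; exact: addr_ge0 (T_ge0 _) (T_ge0 _).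
have hcfg : T (f + g) <= `|c + c|.
  rewrite ger0_norm ?(addr_ge0 c0 c0) //; apply: (@le_trans _ _ c).
    rewrite /c lerDr; exact: addr_ge0 (T_ge0 _) (T_ge0 _).
  by rewrite lerDl.
have E : f + g + (c + c) *: p = (f + c *: p) + (g + c *: p) by rewrite scalerDl addrACA.
rewrite (Wext_eq hcf) (Wext_eq hcg) (Wext_eq hcfg) E HWa ?pos_big //; last first.
  by rewrite -E pos_big.
by rewrite [(c + c) *: _]scalerDl opprD addrACA.
Qed.

Lemma Wext0 : Wext 0 = 0.
Proof.
have h := WextD 0 0; rewrite addr0 in h.
by apply: (addIr (Wext 0)); rewrite add0r -h.
Qed.

Lemma WextZ a f : Wext (a *: f) = a *: Wext f.
Proof.
have [->|a0] := eqVneq a 0; first by rewrite !scale0r Wext0.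
have na0 : `|a| != 0 by rewrite normr_eq0.
set d := T f + T (a *: f) / `|a|.
have d0 : 0 <= d := addr_ge0 (T_ge0 _) (divr_ge0 (T_ge0 _) (normr_ge0 a)).
have hd : T f <= `|d|.
  rewrite ger0_norm // /d lerDl; exact: divr_ge0 (T_ge0 _) (normr_ge0 a).
have hc : T (a *: f) <= `|a * d|.
  rewrite normrM (ger0_norm d0) /d mulrDr [`|a| * (_ / _)]mulrC divfK //.
  rewrite lerDr; exact: mulr_ge0 (normr_ge0 a) (T_ge0 _).
rewrite (Wext_eq hc) (Wext_eq hd).
have E : a *: f + (a * d) *: p = a *: (f + d *: p) by rewrite scalerDr scalerA.
by rewrite E HWs ?pos_big // scalerBr scalerA.
Qed.

Lemma Wext_lin a f g : Wext (a *: f + g) = a *: Wext f + Wext g.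
Proof. by rewrite WextD WextZ. Qed.

Lemma Wext_uniq (W'' : V -> V) :
  (forall a f g, W'' (a *: f + g) = a *: W'' f + W'' g) ->
  (forall f, pos f -> W'' f = W f) -> forall f, Wext f = W'' f.
Proof.
move=> hl ha f; rewrite /Wext -ha ?pos_big ?T_norm // -ha //.
by rewrite [f + _]addrC hl addrAC subrr add0r.
Qed.

Lemma decomp f : f = (f + T f *: p) + ((- T f) *: p).
Proof. by rewrite scaleNr addrK. Qed.
End Gen.

Unset Implicit Arguments. Set Strict Implicit.

Theorem lemma2p2 (R : realType) (V : lmodType R[i]) (form : V -> V -> R[i])
  (Hind : indefinite_inner_product form) (Hnd : ip_nondegenerate form) :
  (forall f : V, exists g1 g2 : V, Fpp form g1 /\ Fpp form g2 /\ f = g1 + g2) /\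
  (forall W : V -> V, linear_on_Fpp form W ->
     exists W' : V -> V,
       [/\ linear_op W',
           (forall f : V, Fpp form f -> W' f = W f) &
           (forall W'' : V -> V, linear_op W'' ->
              (forall f : V, Fpp form f -> W'' f = W f) ->
              forall f : V, W'' f = W' f)]).
Proof.
case: Hind => [[Hlin Hherm] [[p Hp] _]].
split.
  move=> f; exists (f + T form p f *: p), ((- T form p f) *: p); split; last split.
  - by apply: (pos_big Hlin Hherm Hp); rewrite (T_norm Hp).
  - by apply: (posZ Hlin Hherm Hp); rewrite oppr_eq0; exact: (T_neq0 Hp).
  - exact: decomp.
move=> W [HWs HWa].
exists (Wext form p W); split.
- move=> a f g; exact (Wext_lin Hlin Hherm Hp HWs HWa a f g).
- move=> f hf; exact (Wext_pos Hlin Hherm Hp HWs HWa hf).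
- move=> W'' hl ha f; symmetry; exact (Wext_uniq Hlin Hherm Hp hl ha f).
Qed.
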